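(* Let $k$ be a positive integer. (i) There is no function $f:\mathbb{N}\to\mathbb{N}$ such that $\gamma_{P,k}(G-v)\le f(\gamma_{P,k}(G))$ for every graph $G$ and every vertex $v$ of $G$. (ii) For every graph $G$ and every vertex $v$ of $G$, $\gamma_{P,k}(G-v)\ge \gamma_{P,k}(G)-1$. (iii) Moreover, if $\gamma_{P,k}(G-v)= \gamma_{P,k}(G)-1$, then $\mathrm{rad}_{P,k}(G)\le \mathrm{rad}_{P,k}(G-v)$.
   Context: All graphs are finite and simple; $G-v$ is obtained by deleting $v$ and its incident edges. $N_G[v]$ is the closed neighbourhood of $v$, and $N_G[S]$ the union of closed neighbourhoods of vertices of $S$. For $S\subseteq V(G)$, define $\mathcal{P}^{0}_{G,k}(S)=N_G[S]$ and $\mathcal{P}^{i+1}_{G,k}(S)=\bigcup\{N_G[v] : v\in \mathcal{P}^{i}_{G,k}(S),\ |N_G[v]\setminus \mathcal{P}^{i}_{G,k}(S)|\le k\}$; these increase and stabilize to $\mathcal{P}^{\infty}_{G,k}(S)$. $S$ is a $k$-power dominating set ($k$-PDS) if $\mathcal{P}^{\infty}_{G,k}(S)=V(G)$; $\gamma_{P,k}(G)$ is the minimum size of a $k$-PDS. For a $k$-PDS $S$, $\mathrm{rad}_{P,k}(G,S)=1+\min\{i:\mathcal{P}^{i}_{G,k}(S)=V(G)\}$, and $\mathrm{rad}_{P,k}(G)$ is the minimum of $\mathrm{rad}_{P,k}(G,S)$ over all $k$-PDS $S$ of $G$ with $|S|=\gamma_{P,k}(G)$. *)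

(* Defs.v *)
From Stdlib Require Import ClassicalEpsilon.
From mathcomp Require Import all_boot.

Set Implicit Arguments.
Unset Strict Implicit.
Unset Printing Implicit Defensive.

(* A finite simple graph G is given by a vertex set V : {set T} inside a
   finite type T, and an adjacency relation e : rel T which is symmetric and
   irreflexive; only vertices of V (and edges between them) belong to G.
   The vertex-deleted graph G - v is (V :\ v, e). *)

Definition simple_rel (T : finType) (e : rel T) : Prop :=
  symmetric e /\ irreflexive e.

(* minimum of a set of natural numbers given as a predicate (0 if empty) *)
Definition minval (P : nat -> Prop) : nat :=
  match excluded_middle_informative (exists n, P n) with
  | left h =>
      @ex_minn (fun n => if excluded_middle_informative (P n) then true else false)
        (let: ex_intro n Hn := h in
         ex_intro _ n (match excluded_middle_informative (P n) as b
                        return (if b then true else false) with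
                       | left _ => erefl true
                       | right hn => False_ind _ (hn Hn) end))
  | right _ => 0
  end.

Section PowerDomination.
Variables (T : finType) (e : rel T) (V : {set T}) (k : nat).

Definition cnbhd (x : T) : {set T} := [set u in V | (u == x) || e x u].

Definition cnbhdS (S : {set T}) : {set T} := \bigcup_(x in S) cnbhd x.

Definition pd_step (P : {set T}) : {set T} :=
  \bigcup_(x in P | #|cnbhd x :\: P| <= k) cnbhd x.

Definition pd_iter (i : nat) (S : {set T}) : {set T} :=
  iter i pd_step (cnbhdS S).

Definition pd_inf (S : {set T}) : T -> Prop :=
  fun x => exists i, x \in pd_iter i S.

Definition is_kPDS (S : {set T}) : Prop :=
  S \subset V /\ (forall x, pd_inf S x <-> x \in V).

Definition gammaPk : nat :=
  minval (fun n => exists S, is_kPDS S /\ #|S| = n).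

Definition radPk_S (S : {set T}) : nat :=
  1 + minval (fun i => pd_iter i S = V).

Definition radPk : nat :=
  minval (fun r => exists S, is_kPDS S /\ #|S| = gammaPk /\ radPk_S S = r).

End PowerDomination.

(* Main.v *)
From Stdlib Require Import ClassicalEpsilon.
Require Import Defs.
From mathcomp Require Import all_boot.
Set Implicit Arguments.
Unset Strict Implicit.

Lemma minval_spec (P : nat -> Prop) : (exists n, P n) ->
  P (minval P) /\ forall m, P m -> minval P <= m.
Proof.
move=> ex; rewrite /minval; case: excluded_middle_informative => // h.
case: ex_minnP => m Hm Hmin; split.
  by move: Hm; case: excluded_middle_informative.
move=> n Pn; apply: Hmin; by case: excluded_middle_informative.
Qed.

Lemma minval_le (P : nat -> Prop) m : P m -> minval P <= m.
Proof. by move=> Pm; apply: (proj2 (minval_spec (ex_intro _ m Pm))). Qed.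

Section Gen.
Variables (T : finType) (e : rel T) (V : {set T}) (k : nat).

Lemma cnbhd_sub x : cnbhd e V x \subset V.
Proof. by apply/subsetP=> u; rewrite inE => /andP[]. Qed.

Lemma pd_iter_sub i (S : {set T}) : pd_iter e V k i S \subset V.
Proof.
rewrite /pd_iter; case: i => [|i] /=; apply/bigcupsP => x _; exact: cnbhd_sub.
Qed.

Lemma mem_cnbhd x : x \in V -> x \in cnbhd e V x.
Proof. by move=> xV; rewrite inE eqxx orTb andbT. Qed.

Lemma pd_step_mono (P Q : {set T}) : P \subset Q -> pd_step e V k P \subset pd_step e V k Q.
Proof.
move=> PQ; apply/bigcupsP => x /andP[xP hx]; apply: (bigcup_max x) => //.
by rewrite (subsetP PQ) //= (leq_trans _ hx) // subset_leq_card // setDS.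
Qed.

Lemma pd_iter_S (S : {set T}) i : S \subset V -> pd_iter e V k i S \subset pd_iter e V k i.+1 S.
Proof.
move=> SV; elim: i => [|i IH]; last by apply: pd_step_mono.
apply/bigcupsP => x xS; rewrite /pd_iter /=.
have xin : x \in cnbhdS e V S.
  by apply/bigcupP; exists x => //; apply: mem_cnbhd (subsetP SV x xS).
apply: (bigcup_max x) => //; rewrite xin /=.
have -> : cnbhd e V x :\: cnbhdS e V S = set0.
  by apply/eqP; rewrite setD_eq0; apply: (bigcup_sup x).
by rewrite cards0.
Qed.

Lemma pd_iter_mono (S : {set T}) i j : S \subset V -> i <= j ->
  pd_iter e V k i S \subset pd_iter e V k j S.
Proof.
move=> SV; elim: j => [|j IH]; first by rewrite leqn0 => /eqP ->.
rewrite leq_eqVlt => /orP[/eqP -> //|]; rewrite ltnS => /IH H.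
exact: subset_trans H (pd_iter_S _ SV).
Qed.

Lemma pd_iter_exists (S : {set T}) : is_kPDS e V k S -> exists i, pd_iter e V k i S = V.
Proof.
case=> SV H.
have : forall s : seq T, (forall x, x \in s -> x \in V) ->
   exists i, forall x, x \in s -> x \in pd_iter e V k i S.
  elim=> [|a s IH] hs; first by exists 0.
  have [i1 Hi1] : pd_inf e V k S a by apply/H/hs; rewrite inE eqxx.
  have [i2 Hi2] := IH (fun x (xs : x \in s) => hs x (@mem_behead _ (a :: s) x xs)).
  exists (maxn i1 i2) => x; rewrite inE => /orP[/eqP ->|xs].
    exact: (subsetP (pd_iter_mono SV (leq_maxl i1 i2))).
  exact: (subsetP (pd_iter_mono SV (leq_maxr i1 i2))) _ (Hi2 _ xs).
move=> /(_ (enum V)) [x|i Hi]; first by rewrite mem_enum.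
exists i; apply/eqP; rewrite eqEsubset pd_iter_sub /=.
by apply/subsetP => x xV; apply: Hi; rewrite mem_enum.
Qed.

Lemma V_kPDS : is_kPDS e V k V.
Proof.
split=> // x; split; first by case=> i; apply: (subsetP (pd_iter_sub i V)).
by move=> xV; exists 0; apply/bigcupP; exists x => //; apply: mem_cnbhd.
Qed.

Lemma gamma_spec : exists S, is_kPDS e V k S /\ #|S| = gammaPk e V k.
Proof.
have [H _] := minval_spec (ex_intro _ #|V| (ex_intro _ V (conj V_kPDS erefl))
  : exists n, exists S, is_kPDS e V k S /\ #|S| = n).
by case: H => S [h1 h2]; exists S.
Qed.

Lemma gamma_le (S : {set T}) : is_kPDS e V k S -> gammaPk e V k <= #|S|.
Proof. by move=> h; apply: minval_le; exists S. Qed.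

Lemma rad_spec : exists S, is_kPDS e V k S /\ #|S| = gammaPk e V k /\
   radPk_S e V k S = radPk e V k.
Proof.
have [S [h1 h2]] := gamma_spec.
have [H _] := minval_spec (ex_intro _ (radPk_S e V k S) (ex_intro _ S (conj h1 (conj h2 erefl)))
  : exists r, exists S, is_kPDS e V k S /\ #|S| = gammaPk e V k /\ radPk_S e V k S = r).
by case: H => S' [? [? ?]]; exists S'.
Qed.

Lemma rad_le (S : {set T}) : is_kPDS e V k S -> #|S| = gammaPk e V k -> radPk e V k <= radPk_S e V k S.
Proof. by move=> h1 h2; apply: minval_le; exists S. Qed.

End Gen.
Section Del.
Variables (T : finType) (e : rel T) (V : {set T}) (k : nat) (v : T).
Hypothesis hv : v \in V.

Lemma cnbhd_del x : cnbhd e (V :\ v) x = cnbhd e V x :\ v.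
Proof. by apply/setP=> u; rewrite !inE andbA. Qed.

Lemma iter_del (S' : {set T}) i : S' \subset V :\ v ->
  pd_iter e (V :\ v) k i S' \subset pd_iter e V k i (v |: S').
Proof.
move=> SV; have SV2 : v |: S' \subset V.
  by rewrite subUset sub1set hv (subset_trans SV) // subD1set.
have vin : forall j, v \in pd_iter e V k j (v |: S').
  move=> j; apply: (subsetP (pd_iter_mono e k SV2 (leq0n j))).
  apply/bigcupP; exists v; [by rewrite setU11 | exact: mem_cnbhd].
elim: i => [|i IH].
  apply/bigcupsP => x xS; apply: (bigcup_max x); first by rewrite setU1r.
  by rewrite cnbhd_del subD1set.
apply/bigcupsP => x /andP[xA hx]; apply: (bigcup_max x).
  rewrite (subsetP IH) //= (leq_trans _ hx) // subset_leq_card //.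
  apply/subsetP => u; rewrite !inE => /andP[uB /andP[uV uN]].
  have uv : u != v by apply: contraNneq uB => ->; apply: vin.
  rewrite uv uV uN /= andbT; apply: contraNN uB; apply: (subsetP IH).
by rewrite cnbhd_del subD1set.
Qed.

Lemma kPDS_del (S' : {set T}) : is_kPDS e (V :\ v) k S' -> is_kPDS e V k (v |: S').
Proof.
case=> SV H; split.
  by rewrite subUset sub1set hv (subset_trans SV) // subD1set.
move=> x; split; first by case=> i; apply: (subsetP (@pd_iter_sub _ e V k i _)).
move=> xV; case: (eqVneq x v) => [->|xv].
  by exists 0; apply/bigcupP; exists v; [rewrite setU11 | exact: mem_cnbhd].
have [i Hi] : pd_inf e (V :\ v) k S' x by apply/H; rewrite in_setD1 xv xV.
by exists i; apply: (subsetP (iter_del i SV)).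
Qed.

Lemma iter_del_eq (S' : {set T}) i : S' \subset V :\ v ->
  pd_iter e (V :\ v) k i S' = V :\ v -> pd_iter e V k i (v |: S') = V.
Proof.
move=> SV Hi; apply/eqP; rewrite eqEsubset pd_iter_sub /=.
have SV2 : v |: S' \subset V.
  by rewrite subUset sub1set hv (subset_trans SV) // subD1set.
apply/subsetP => x xV; case: (eqVneq x v) => [->|xv].
  apply: (subsetP (pd_iter_mono e k SV2 (leq0n i))).
  apply/bigcupP; exists v; [by rewrite setU11 | exact: mem_cnbhd].
by apply: (subsetP (iter_del i SV)); rewrite Hi in_setD1 xv xV.
Qed.

End Del.
Lemma pd_iter_set0 (T : finType) (e : rel T) (V : {set T}) k i :
  pd_iter e V k i set0 = set0.
Proof.
apply/eqP; rewrite -subset0; case: i => [|i]; rewrite /pd_iter /=.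
  by apply/bigcupsP => x; rewrite inE.
elim: i => [|i IH] /=.
  apply/bigcupsP => x /andP[]; move=> /bigcupP[y]; by rewrite inE.
apply/bigcupsP => x /andP[xP _]; by have := subsetP IH x xP; rewrite inE.
Qed.

Lemma gamma_pos (T : finType) (e : rel T) (V : {set T}) k v : v \in V ->
  0 < gammaPk e V k.
Proof.
move=> hv; have [S [[_ hS] cS]] := gamma_spec e V k.
rewrite -cS card_gt0; apply/negP => /eqP S0.
have [i] := (proj2 (hS v) hv); by rewrite S0 pd_iter_set0 inE.
Qed.

Definition star_rel n : rel 'I_n.+2 := fun x y => (x == ord0) != (y == ord0).
Arguments star_rel : clear implicits.

Lemma star (n k : nat) : 0 < k ->
  simple_rel (star_rel n) /\ (ord0 \in [set: 'I_n.+2]) /\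
  gammaPk (star_rel n) [set: 'I_n.+2] k = 1 /\
  n < gammaPk (star_rel n) ([set: 'I_n.+2] :\ ord0) k.
Proof.
move=> hk; split; first by split => [x y|x]; rewrite /star_rel /= ?eqxx // eq_sym.
split; first by rewrite inE.
split.
  apply/eqP; rewrite eqn_leq (gamma_pos (star_rel n) k (in_setT ord0)) andbT.
  have -> : 1 = #|[set (@ord0 n.+1)]| by rewrite cards1.
  apply: gamma_le; split; first exact: subsetT.
  move=> x; split; first by rewrite inE.
  move=> _; exists 0; apply/bigcupP; exists ord0; first exact: set11.
  by rewrite !inE /star_rel /= eqxx; case: (x == ord0).
set V' := [set: 'I_n.+2] :\ ord0.
have [S [[SV hS] cS]] := gamma_spec (star_rel n) V' k.
have nb : forall y, y \in V' -> cnbhd (star_rel n) V' y \subset [set y].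
  move=> y; rewrite !inE andbT => y0; apply/subsetP => u.
  by rewrite !inE /star_rel (negbTE y0) andbT => /andP[/negbTE -> ]; rewrite orbF.
have sub : forall i, pd_iter (star_rel n) V' k i S \subset S.
  elim=> [|i IH]; rewrite /pd_iter /=.
    apply/bigcupsP => x xS; apply: subset_trans (nb x (subsetP SV x xS)) _.
    by rewrite sub1set.
  apply/bigcupsP => x /andP[xP _]; have xS := subsetP IH x xP.
  by apply: subset_trans (nb x (subsetP SV x xS)) _; rewrite sub1set.
have -> : gammaPk (star_rel n) V' k = #|V'|.
  have SeqV : S = V'.
    apply/eqP; rewrite eqEsubset SV /=.
    apply/subsetP => x xV; have [i Hi] := proj2 (hS x) xV.
    exact: (subsetP (sub i)).
  by rewrite -cS SeqV.
have := cardsD1 (@ord0 n.+1) [set: 'I_n.+2].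
by rewrite cardsT card_ord inE /= add1n => -[<-].
Qed.

Theorem mainTheorem2 (k : nat) (hk : 0 < k) :
  (* (i) *)
  ~ (exists f : nat -> nat,
        forall (T : finType) (e : rel T) (V : {set T}) (v : T),
          simple_rel e -> v \in V ->
          gammaPk e (V :\ v) k <= f (gammaPk e V k))
  /\
  (forall (T : finType) (e : rel T) (V : {set T}) (v : T),
     simple_rel e -> v \in V ->
     (* (ii) *)
     gammaPk e V k - 1 <= gammaPk e (V :\ v) k
     /\
     (* (iii) *)
     (gammaPk e (V :\ v) k = gammaPk e V k - 1 ->
        radPk e V k <= radPk e (V :\ v) k)).
Proof.
split.
  case=> f Hf; have [se [hv [g1 g2]]] := star (f 1) hk.
  have := Hf _ _ _ _ se hv; rewrite g1 => H.
  by have := leq_trans g2 H; rewrite ltnn.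
move=> T e V v _ hv.
have card_del : forall S' : {set T}, S' \subset V :\ v -> #|v |: S'| = #|S'|.+1.
  move=> S' SV; rewrite cardsU1; case: (boolP (v \in S')) => // vS.
  by have := subsetP SV v vS; rewrite !inE eqxx.
have [S' [hS' cS']] := gamma_spec e (V :\ v) k.
split.
  have := gamma_le (kPDS_del hv hS'); rewrite card_del ?cS'; last exact: hS'.1.
  by rewrite leq_subLR add1n.
move=> Heq.
have [S1 [h1 [c1 r1]]] := rad_spec e (V :\ v) k.
have hS := kPDS_del hv h1.
have gp := gamma_pos e k hv.
have cS : #|v |: S1| = gammaPk e V k.
  by rewrite card_del ?c1 ?Heq ?subn1 ?prednK //; exact: h1.1.
apply: leq_trans (rad_le hS cS) _.
rewrite -r1 /radPk_S leq_add2l.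
have [i0 Hi0] := pd_iter_exists h1.
have [P0 _] := minval_spec (ex_intro _ i0 Hi0 : exists i, pd_iter e (V :\ v) k i S1 = V :\ v).
apply: minval_le; apply: (iter_del_eq hv h1.1); exact: P0.
Qed.
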